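(* Assume no treatment anticipation, missingness as an absorbing state, random sampling, the selection model, and monotonicity. Assume also that $\mathbb{E}[S_{it}\mid G_i=g]>0$ for all $t,g$. If positive monotonicity holds ($S_{i2}(1)\ge S_{i2}(0)$ for all $i$), then $\pi_0=1$ and $$\pi_1=\frac{\mathbb{E}[S_{i2}(0)\mid G_i=1]}{\mathbb{E}[S_{i2}\mid G_i=1]}=\frac{\mathbb{E}[S_{i1}\mid G_i=1]}{\mathbb{E}[S_{i2}\mid G_i=1]}\cdot\frac{\mathbb{E}[S_{i2}\mid G_i=0]}{\mathbb{E}[S_{i1}\mid G_i=0]}\in[0,1].$$ If negative monotonicity holds ($S_{i2}(1)\le S_{i2}(0)$ for all $i$), then $\pi_1=1$ and $$\pi_0=\frac{\mathbb{E}[S_{i2}(1)\mid G_i=0]}{\mathbb{E}[S_{i2}\mid G_i=0]}=\frac{\mathbb{E}[S_{i1}\mid G_i=0]}{\mathbb{E}[S_{i2}\mid G_i=0]}\cdot\frac{\mathbb{E}[S_{i2}\mid G_i=1]}{\mathbb{E}[S_{i1}\mid G_i=1]}\in[0,1].$$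
   Context: Units $i$ are observed in periods $t\in\{1,2\}$. $G_i\in\{0,1\}$ indicates that unit $i$ is treated in period 2; nobody is treated in period 1. Period-2 potential selection indicators are $S_{i2}(1),S_{i2}(0)\in\{0,1\}$, where 1 means the outcome is observed. The observed indicator is $S_{i2}=G_iS_{i2}(1)+(1-G_i)S_{i2}(0)$. No anticipation: $S_{i1}$ does not depend on the period-2 treatment, so $S_{i1}(1)=S_{i1}(0)=S_{i1}$. Missingness is absorbing: $S_{i1}=0\Rightarrow S_{i2}=0$. Random sampling: $\{S_{i1},S_{i2},G_i\}$ are i.i.d. across units. Definitions: - $\pi_1=\Pr(S_{i2}(0)=1\mid G_i=1,S_{i2}(1)=1)$. - $\pi_0=\Pr(S_{i2}(1)=1\mid G_i=0,S_{i2}(0)=1)$. Selection model: $S_{it}(0)=h^0(U_{it},t)$ and $S_{it}(1)=h^1(U_{it},t)$, where: - $U_{it}$ is an unobserved scalar; - $h^w(u,t)$ is non-decreasing in $u$ for all $t\in\{1,2\}$ and $w\in\{0,1\}$; - $U$ is continuously distributed, with the same compact support in both groups; - the distribution of $U_{i1}$ given $G_i$ equals that of $U_{i2}$ given $G_i$; - $U_{it}$ is independent of $G_i$ given $S_{it}$, for each $t$. Monotonicity means that either positive monotonicity ($S_{i2}(1)\ge S_{i2}(0)$ for all $i$) or negative monotonicity ($S_{i2}(1)\le S_{i2}(0)$ for all $i$) holds. *)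

(* Defs.v *)
From mathcomp Require Import all_boot all_order all_algebra.
From mathcomp Require Import all_classical all_reals all_analysis.
Import Order.TTheory GRing.Theory Num.Theory.
Set Implicit Arguments. Unset Strict Implicit. Unset Printing Implicit Defensive.
Local Open Scope classical_set_scope.
Local Open Scope ring_scope.

Section Defs.
Context {d : measure_display} {T : measurableType d} {R : realType}.
Variable P : probability T R.

Definition prR (A : set T) : R := fine (P A).

Definition cprob (A B : set T) : R := prR (A `&` B) / prR B.

(* E[X | B] for a {0,1}-valued (indicator) random variable X *)
Definition cexp_ind (X : T -> bool) (B : set T) : R := cprob [set w | X w] B.

Definition grp (G : T -> bool) (g : bool) : set T := [set w | G w = g].

Definition cond_support (X : T -> R) (G : T -> bool) (g : bool) : set R :=
  [set u | forall e : R, 0 < e ->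
     0 < prR ([set w | `|X w - u| < e] `&` grp G g)].

Definition cond_indep (X : T -> R) (G S : T -> bool) : Prop :=
  forall (B : set R) (g s : bool), measurable B ->
    prR (X @^-1` B `&` grp G g `&` [set w | S w = s]) * prR [set w | S w = s]
    = prR (X @^-1` B `&` [set w | S w = s]) *
      prR (grp G g `&` [set w | S w = s]).
End Defs.

(* period-1 selection S_i1 = h^0(U_i1, 1) (= h^1(U_i1,1) by no anticipation) *)
Definition S1 {T R} (h0 : R -> nat -> bool) (U1 : T -> R) (w : T) : bool :=
  h0 (U1 w) 1%N.
Definition S2pot {T R} (h : R -> nat -> bool) (U2 : T -> R) (w : T) : bool :=
  h (U2 w) 2%N.
Definition S2obs {T R} (G : T -> bool) (h0 h1 : R -> nat -> bool)
  (U2 : T -> R) (w : T) : bool :=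
  if G w then S2pot h1 U2 w else S2pot h0 U2 w.

(* Main.v *)
Require Import Defs.
From mathcomp Require Import all_boot all_order all_algebra.
From mathcomp Require Import all_classical all_reals all_analysis.
From mathcomp Require Import measurable_realfun.
Import Order.TTheory GRing.Theory Num.Theory.
Import numFieldNormedType.Exports.
From mathcomp Require Import ring.
Local Open Scope classical_set_scope.
Local Open Scope ring_scope.

Section H.
Context {d : measure_display} {T : measurableType d} {R : realType}.
Variable P : probability T R.

Lemma prR_ge0 A : 0 <= prR P A.
Proof. by rewrite /prR fine_ge0. Qed.

Lemma prR_fin A : measurable A -> P A \is a fin_num.
Proof.
move=> mA; rewrite ge0_fin_numE //.
by apply: (le_lt_trans (probability_le1 P mA)); rewrite ltry.
Qed.

Lemma prR_le A B : measurable A -> measurable B -> A `<=` B -> prR P A <= prR P B.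
Proof.
move=> mA mB AB; apply: fine_le; rewrite ?inE; try exact: prR_fin.
by apply: le_measure => //; rewrite inE.
Qed.

Lemma ratio01 A B : measurable A -> measurable B -> A `<=` B ->
  0 <= prR P A / prR P B <= 1.
Proof.
move=> mA mB AB; apply/andP; split.
  by apply: divr_ge0; apply: prR_ge0.
have [->|nz] := eqVneq (prR P B) 0; first by rewrite invr0 mulr0.
have Bp : 0 < prR P B by rewrite lt_def nz prR_ge0.
by rewrite ler_pdivrMr // mul1r prR_le.
Qed.

Lemma pos_ratio (x y : R) : 0 <= x -> 0 <= y -> 0 < x / y -> 0 < x /\ 0 < y.
Proof.
move=> x0 y0 h; split.
- rewrite lt_def x0 andbT; apply/eqP => x00; by move: h; rewrite x00 mul0r ltxx.
- rewrite lt_def y0 andbT; apply/eqP => y00; by move: h; rewrite y00 invr0 mulr0 ltxx.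
Qed.

Lemma mpre (f : T -> R) (B : set R) : measurable_fun setT f -> measurable B ->
  measurable (f @^-1` B).
Proof. by move=> mf mB; rewrite -[_ @^-1` _]setTI; apply: mf. Qed.

Lemma up_meas (a : R -> bool) : (forall u v, u <= v -> a u -> a v) ->
  measurable [set u | a u].
Proof.
move=> ha; apply: is_interval_measurable => x y ax ay z /andP[xz _].
exact: ha xz ax.
Qed.

Lemma up_nested (a b : R -> bool) : (forall u v, u <= v -> a u -> a v) ->
  (forall u v, u <= v -> b u -> b v) ->
  (forall u, b u -> a u) \/ (forall u, a u -> b u).
Proof.
move=> ha hb; have [h|h] := pselect (forall u, b u -> a u); [by left|right].
have [u] : exists u, b u && ~~ a u.
  apply: contra_notP h => nex u bu; apply/negPn/negP => nau.
  by apply: nex; exists u; rewrite bu nau.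
move=> /andP[bu /negbTE nau].
move=> v av; have [vu|uv] := leP v u.
- by rewrite (ha _ _ vu av) in nau.
- exact: hb _ _ (ltW uv) bu.
Qed.

Lemma core (G : T -> bool) (U1 U2 : T -> R) (a b : R -> bool) :
  (forall g, measurable (grp G g)) ->
  measurable_fun setT U1 -> measurable_fun setT U2 ->
  (forall u v, u <= v -> a u -> a v) ->
  (forall u v, u <= v -> b u -> b v) ->
  (forall (B : set R) (g : bool), measurable B ->
     prR P (U1 @^-1` B `&` grp G g) = prR P (U2 @^-1` B `&` grp G g)) ->
  cond_indep P U1 G (fun w => a (U1 w)) ->
  (forall w, b (U2 w) -> a (U1 w)) ->
  0 < prR P ([set w | a (U1 w)] `&` grp G false) ->
  prR P ([set w | b (U2 w)] `&` grp G true) *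
    prR P ([set w | a (U1 w)] `&` grp G false) =
  prR P ([set w | b (U2 w)] `&` grp G false) *
    prR P ([set w | a (U1 w)] `&` grp G true).
Proof.
move=> mG mU1 mU2 ha hb hd hind habs hpos.
have mA := @up_meas a ha; have mB := @up_meas b hb.
have mA1 : measurable [set w | a (U1 w)] by exact: (mpre _ _ mU1 mA).
have mB2 : measurable [set w | b (U2 w)] by exact: (mpre _ _ mU2 mB).
have mB1 : measurable [set w | b (U1 w)] by exact: (mpre _ _ mU1 mB).
case: (@up_nested a b ha hb) => [ba|ab].
- pose p := prR P [set w | a (U1 w) = true].
  pose n := prR P (U1 @^-1` [set u | b u] `&` [set w | a (U1 w) = true]).
  have eq g : prR P (U1 @^-1` [set u | b u] `&` grp G g) * p =
              n * prR P ([set w | a (U1 w)] `&` grp G g).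
    have h := hind _ g true mB.
    have s1 : U1 @^-1` [set u | b u] `&` grp G g `&` [set w | a (U1 w) = true]
              = U1 @^-1` [set u | b u] `&` grp G g.
      apply/seteqP; split => w /=; first by move=> [[]].
      by move=> [? ?]; split => //; exact: ba.
    have s2 : grp G g `&` [set w | a (U1 w) = true] = [set w | a (U1 w)] `&` grp G g.
      by rewrite setIC.
    by rewrite /= s1 s2 in h; exact: h.
  have pp : 0 < p.
    apply: (lt_le_trans hpos); rewrite /p.
    apply: prR_le; [exact: measurableI (mG false)|exact: mA1|by move=> w []].
  have e1 := eq true; have e0 := eq false.
  have -> : prR P ([set w | b (U2 w)] `&` grp G true) =
            prR P (U1 @^-1` [set u | b u] `&` grp G true) by rewrite hd.
  have -> : prR P ([set w | b (U2 w)] `&` grp G false) =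
            prR P (U1 @^-1` [set u | b u] `&` grp G false) by rewrite hd.
  apply: (mulIf (lt0r_neq0 pp)).
  rewrite -mulrA [X in _ * X = _]mulrC mulrA e1.
  rewrite -[RHS]mulrA [X in _ = _ * X]mulrC [RHS]mulrA e0.
  by rewrite -!mulrA [X in _ * X = _]mulrC.
- have eq g : prR P ([set w | b (U2 w)] `&` grp G g) =
              prR P ([set w | a (U1 w)] `&` grp G g).
    apply/eqP; rewrite eq_le; apply/andP; split.
      apply: prR_le; try exact: measurableI.
      by move=> w [bw gw]; split => //; exact: habs.
    have -> : prR P ([set w | b (U2 w)] `&` grp G g) =
            prR P (U1 @^-1` [set u | b u] `&` grp G g) by rewrite hd.
    apply: prR_le; try exact: measurableI.
    by move=> w [aw gw]; split => //; exact: ab.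
  by rewrite !eq mulrC.
Qed.
End H.

Theorem proposition3 (d : measure_display) (T : measurableType d) (R : realType)
  (P : probability T R) (G : T -> bool) (U1 U2 : T -> R)
  (h0 h1 : R -> nat -> bool) :
  (* measurability of the treatment indicator and of the latent U_it *)
  (forall g, measurable (grp G g)) ->
  measurable_fun setT U1 -> measurable_fun setT U2 ->
  (* selection model: h^w(u,t) non-decreasing in u *)
  (forall t u v, u <= v -> h0 u t -> h0 v t) ->
  (forall t u v, u <= v -> h1 u t -> h1 v t) ->
  (* U continuously distributed (no atoms) *)
  (forall u, prR P (U1 @^-1` [set u]) = 0) ->
  (forall u, prR P (U2 @^-1` [set u]) = 0) ->
  (* same compact support in both groups *)
  cond_support P U1 G true = cond_support P U1 G false ->
  compact (cond_support P U1 G true) ->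
  cond_support P U2 G true = cond_support P U2 G false ->
  compact (cond_support P U2 G true) ->
  (* U_i1 | G has the same distribution as U_i2 | G *)
  (forall (B : set R) (g : bool), measurable B ->
     prR P (U1 @^-1` B `&` grp G g) = prR P (U2 @^-1` B `&` grp G g)) ->
  (* U_it independent of G given S_it *)
  cond_indep P U1 G (S1 h0 U1) ->
  cond_indep P U2 G (S2obs G h0 h1 U2) ->
  (* no anticipation: S_i1(1) = S_i1(0) *)
  (forall w, h1 (U1 w) 1%N = h0 (U1 w) 1%N) ->
  (* missingness is absorbing *)
  (forall w, ~~ S1 h0 U1 w -> ~~ S2obs G h0 h1 U2 w) ->
  (* monotonicity *)
  ((forall w, S2pot h0 U2 w -> S2pot h1 U2 w) \/
   (forall w, S2pot h1 U2 w -> S2pot h0 U2 w)) ->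
  (* E[S_it | G = g] > 0 *)
  (forall g, 0 < cexp_ind P (S1 h0 U1) (grp G g) /\
             0 < cexp_ind P (S2obs G h0 h1 U2) (grp G g)) ->
  let pi1 := cprob P [set w | S2pot h0 U2 w]
               (grp G true `&` [set w | S2pot h1 U2 w]) in
  let pi0 := cprob P [set w | S2pot h1 U2 w]
               (grp G false `&` [set w | S2pot h0 U2 w]) in
  ((forall w, S2pot h0 U2 w -> S2pot h1 U2 w) ->
     pi0 = 1 /\
     pi1 = cexp_ind P (S2pot h0 U2) (grp G true) /
           cexp_ind P (S2obs G h0 h1 U2) (grp G true) /\
     cexp_ind P (S2pot h0 U2) (grp G true) /
       cexp_ind P (S2obs G h0 h1 U2) (grp G true)
     = (cexp_ind P (S1 h0 U1) (grp G true) /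
        cexp_ind P (S2obs G h0 h1 U2) (grp G true)) *
       (cexp_ind P (S2obs G h0 h1 U2) (grp G false) /
        cexp_ind P (S1 h0 U1) (grp G false)) /\
     0 <= pi1 <= 1) /\
  ((forall w, S2pot h1 U2 w -> S2pot h0 U2 w) ->
     pi1 = 1 /\
     pi0 = cexp_ind P (S2pot h1 U2) (grp G false) /
           cexp_ind P (S2obs G h0 h1 U2) (grp G false) /\
     cexp_ind P (S2pot h1 U2) (grp G false) /
       cexp_ind P (S2obs G h0 h1 U2) (grp G false)
     = (cexp_ind P (S1 h0 U1) (grp G false) /
        cexp_ind P (S2obs G h0 h1 U2) (grp G false)) *
       (cexp_ind P (S2obs G h0 h1 U2) (grp G true) /
        cexp_ind P (S1 h0 U1) (grp G true)) /\
     0 <= pi0 <= 1).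

Proof.
move=> mG mU1 mU2 mh0 mh1 _ _ _ _ _ _ hd hind1 _ _ habs _ hpos pi1 pi0.
have mS t (h : R -> nat -> bool) : (forall t u v, u <= v -> h u t -> h v t) ->
    measurable [set w | h (U2 w) t].
  by move=> mh; exact: (mpre _ _ mU2 (up_meas _ (mh t))).
have mS1 : measurable [set w | h0 (U1 w) 1%N].
  exact: (mpre _ _ mU1 (up_meas _ (mh0 1%N))).
have obs0 : [set w | S2obs G h0 h1 U2 w] `&` grp G false =
            [set w | S2pot h0 U2 w] `&` grp G false.
  by apply/seteqP; split => w /= [sw gw]; split => //; move: sw; rewrite /S2obs gw.
have obs1 : [set w | S2obs G h0 h1 U2 w] `&` grp G true =
            [set w | S2pot h1 U2 w] `&` grp G true.
  by apply/seteqP; split => w /= [sw gw]; split => //; move: sw; rewrite /S2obs gw.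
have pos g : [/\ 0 < prR P ([set w | S1 h0 U1 w] `&` grp G g),
   0 < prR P (grp G g) & 0 < prR P ([set w | S2obs G h0 h1 U2 w] `&` grp G g)].
  have [h1' h2'] := hpos g.
  have [a1 a2] := pos_ratio _ _ (prR_ge0 P _) (prR_ge0 P _) h1'.
  have [b1 b2] := pos_ratio _ _ (prR_ge0 P _) (prR_ge0 P _) h2'.
  by split.
have [s1p0 g0p c0p] := pos false.
have [s1p1 g1p c1p] := pos true.
rewrite obs0 in c0p; rewrite obs1 in c1p.
rewrite /cexp_ind /cprob obs0 obs1.
have alg (a g c : R) : g != 0 -> c != 0 -> (a/g)/(c/g) = a/c.
  by move=> gn cn; field; apply/andP; split.
have alg2 (a c s s' cc : R) : c != 0 -> s' != 0 -> a * s' = cc * s ->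
    a / c = s / c * (cc / s').
  move=> cn sn h; apply/eqP; rewrite -subr_eq0.
  have -> : a / c - s / c * (cc / s') = (a * s' - cc * s) / (c * s') by field; apply/andP.
  by rewrite h subrr mul0r.
have mG0 := mG false; have mG1 := mG true.
have mA0 := mS 2%N h0 mh0; have mA1 := mS 2%N h1 mh1.
split => hmon.
-
  have abs w : h0 (U2 w) 2%N -> h0 (U1 w) 1%N.
    move=> s; apply/negPn/negP => ns; move: (habs w ns); rewrite /S2obs.
    by case: (G w) => /negP; apply; [exact: hmon s | exact: s].
  have core1 : prR P ([set w | S2pot h0 U2 w] `&` grp G true) *
    prR P ([set w | S1 h0 U1 w] `&` grp G false) =
    prR P ([set w | S2pot h0 U2 w] `&` grp G false) *
    prR P ([set w | S1 h0 U1 w] `&` grp G true) :=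
    @core _ _ _ P G U1 U2 (fun u => h0 u 1%N) (fun u => h0 u 2%N)
    mG mU1 mU2 (mh0 1%N) (mh0 2%N) hd hind1 abs s1p0.
  have e0 : [set w | S2pot h1 U2 w] `&` (grp G false `&` [set w | S2pot h0 U2 w])
      = [set w | S2pot h0 U2 w] `&` grp G false.
    by apply/seteqP; split => w /=; [move=> [_ []]|move=> [s gw]; split => //; exact: hmon].
  have e1 : [set w | S2pot h0 U2 w] `&` (grp G true `&` [set w | S2pot h1 U2 w])
      = [set w | S2pot h0 U2 w] `&` grp G true.
    by apply/seteqP; split => w /=; [move=> [? []]|move=> [s gw]; split => //; split => //; exact: hmon].
  have e2 : grp G true `&` [set w | S2pot h1 U2 w] = [set w | S2pot h1 U2 w] `&` grp G true.
    by rewrite setIC.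
  have e3 : grp G false `&` [set w | S2pot h0 U2 w] = [set w | S2pot h0 U2 w] `&` grp G false.
    by rewrite setIC.
  split; [|split; [|split]].
  + by rewrite /pi0 /cprob e0 e3 divff // lt0r_neq0.
  + by rewrite /pi1 /cprob e1 e2 alg // lt0r_neq0.
  + rewrite !alg ?lt0r_neq0 //.
    by apply: alg2; rewrite ?lt0r_neq0.
  + rewrite /pi1 /cprob; apply: ratio01.
    * by apply: measurableI => //; apply: measurableI.
    * exact: measurableI.
    * by move=> w [].
-
  have abs w : h1 (U2 w) 2%N -> h0 (U1 w) 1%N.
    move=> s; apply/negPn/negP => ns; move: (habs w ns); rewrite /S2obs.
    by case: (G w) => /negP; apply; [exact: s | exact: hmon s].
  have core1 : prR P ([set w | S2pot h1 U2 w] `&` grp G true) *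
    prR P ([set w | S1 h0 U1 w] `&` grp G false) =
    prR P ([set w | S2pot h1 U2 w] `&` grp G false) *
    prR P ([set w | S1 h0 U1 w] `&` grp G true) :=
    @core _ _ _ P G U1 U2 (fun u => h0 u 1%N) (fun u => h1 u 2%N)
    mG mU1 mU2 (mh0 1%N) (mh1 2%N) hd hind1 abs s1p0.
  have e0 : [set w | S2pot h0 U2 w] `&` (grp G true `&` [set w | S2pot h1 U2 w])
      = [set w | S2pot h1 U2 w] `&` grp G true.
    by apply/seteqP; split => w /=; [move=> [_ []]|move=> [s gw]; split => //; exact: hmon].
  have e1 : [set w | S2pot h1 U2 w] `&` (grp G false `&` [set w | S2pot h0 U2 w])
      = [set w | S2pot h1 U2 w] `&` grp G false.
    by apply/seteqP; split => w /=; [move=> [? []]|move=> [s gw]; split => //; split => //; exact: hmon].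
  have e2 : grp G true `&` [set w | S2pot h1 U2 w] = [set w | S2pot h1 U2 w] `&` grp G true.
    by rewrite setIC.
  have e3 : grp G false `&` [set w | S2pot h0 U2 w] = [set w | S2pot h0 U2 w] `&` grp G false.
    by rewrite setIC.
  split; [|split; [|split]].
  + by rewrite /pi1 /cprob e0 e2 divff // lt0r_neq0.
  + by rewrite /pi0 /cprob e1 e3 alg // lt0r_neq0.
  + rewrite !alg ?lt0r_neq0 //.
    by apply: alg2; rewrite ?lt0r_neq0 // core1.
  + rewrite /pi0 /cprob; apply: ratio01.
    * by apply: measurableI => //; apply: measurableI.
    * exact: measurableI.
    * by move=> w [].
Qed.
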